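(* Let $K$ be a sequence with continuous leading block distribution under $\mathcal F$-expansion, with associated function $f_K^*$. Then there is a uniform continuation $f$ of $F$ such that $f_\infty^{-1}=f_K^*$ and $\{f^{-1}(K_n)\}$ is equidistributed.
   Context: $F$: $F_1=1,F_2=2,F_{n+2}=F_{n+1}+F_n$; $\phi$ golden ratio, $\omega=\phi^{-1}$. Zeckendorf expansion $m=\sum_{k=1}^M\epsilon(k)F_{M-k+1}$ (unique, $\epsilon(k)\in\{0,1\}$, $\epsilon(1)=1$, $\epsilon(k)\epsilon(k+1)=0$); $\mathrm{LB}_s(m)=(\epsilon(1),\dots,\epsilon(s))$ if $M\ge s$. Blocks of equal length are compared lexicographically. $\mathcal F^*$: infinite 0/1 sequences $\mu$ with $\mu(k)\mu(k+1)=0$ and no tail equal to $(1,0,1,0,\dots)$; $\mu|s=(\mu(1),\dots,\mu(s))$, $\mu\cdot\widehat F=\sum_{k\ge1}\mu(k)\omega^{k-1}$; $\mu\mapsto\phi(\mu\cdot\widehat F-1)$ is a bijection from $\{\mu\in\mathcal F^*:\mu(1)=1\}$ onto $(0,1)$. $K$ (positive integers, $K_n\to\infty$) has continuous leading block distribution under $\mathcal F$-expansion if: for every $s\ge2$ and leading block $\mathbf b$ of length $s$ the limit $\lim_n\#\{k\le n:\mathrm{LB}_s(K_k)=\mathbf b\}/n$ exists; for every $\mu\in\mathcal F^*$ with $\mu(1)=1$, $\lim_{s\to\infty}\lim_n\#\{k\le n:\mathrm{LB}_s(K_k)\le\mu|s\}/n$ exists; and $f_K^*:[0,1]\to[0,1]$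 defined by $f_K^*(0)=0$, $f_K^*(1)=1$, $f_K^*(\phi(\mu\cdot\widehat F-1))=$ that limit, is continuous and increasing. A uniform continuation of $F$ is an increasing continuous $f:[1,\infty)\to\mathbb{R}$ with $f(n)=F_n$ such that $f_n(p)=\frac{f(n+p)-f(n)}{f(n+1)-f(n)}$ converges uniformly on $[0,1]$ to an increasing continuous function $f_\infty$. $\{x_n\}$ equidistributed means $\lim_n\#\{k\le n:\{x_k\}\le\beta\}/n=\beta$ for all $\beta\in[0,1]$. *)

(* Defs.v *)
From Stdlib Require Import Reals Lra Lia List Bool Classical ClassicalDescription.
From Coquelicot Require Import Coquelicot.
Open Scope R_scope.

(* Fibonacci: fib n = F_n for n >= 1 (F_1 = 1, F_2 = 2); fib 0 = 1 is a dummy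
   value consistent with the recurrence. *)
Fixpoint fib (n : nat) : nat :=
  match n with
  | O => 1%nat
  | S m => match m with
           | O => 1%nat
           | S k => (fib m + fib k)%nat
           end
  end.

Definition phi : R := (1 + sqrt 5) / 2.
Definition omega : R := / phi.

Fixpoint nocons (e : list bool) : bool :=
  match e with
  | b1 :: ((b2 :: _) as t) => negb (b1 && b2) && nocons t
  | _ => true
  end.

(* value of (eps(1),...,eps(M)) : sum_k eps(k) F_{M-k+1} *)
Fixpoint zval (e : list bool) : nat :=
  match e with
  | nil => 0%nat
  | b :: t => ((if b then fib (S (length t)) else 0) + zval t)%nat
  end.

Definition is_zeck (m : nat) (e : list bool) : Prop :=
  hd false e = true /\ nocons e = true /\ zval e = m.

Definition LB (s m : nat) (b : list bool) : Prop :=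
  exists e, is_zeck m e /\ (s <= length e)%nat /\ firstn s e = b.

Definition leading_block (s : nat) (b : list bool) : Prop :=
  length b = s /\ hd false b = true /\ nocons b = true.

Fixpoint lex_le (a b : list bool) : bool :=
  match a, b with
  | nil, nil => true
  | x :: a', y :: b' =>
      match x, y with
      | false, true => true
      | true, false => false
      | _, _ => lex_le a' b'
      end
  | _, _ => false
  end.

(* ---- the space F* (sequences mu indexed from 0: mu i = mu(i+1) in the paper) ---- *)
Definition Fstar (mu : nat -> bool) : Prop :=
  (forall i, ~ (mu i = true /\ mu (S i) = true)) /\
  ~ (exists N, forall j, mu (N + 2 * j)%nat = true /\ mu (N + 2 * j + 1)%nat = false).

Definition restr (mu : nat -> bool) (s : nat) : list bool := map mu (seq 0 s).

Definition dotF (mu : nat -> bool) : R :=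
  Series (fun i => if mu i then omega ^ i else 0).

Fixpoint count_upto (P : nat -> Prop) (n : nat) : nat :=
  match n with
  | O => O
  | S m => (count_upto P m + (if excluded_middle_informative (P (S m)) then 1 else 0))%nat
  end.

Definition density_seq (P : nat -> Prop) : nat -> R :=
  fun n => INR (count_upto P n) / INR n.

Definition cont_on (A : R -> Prop) (h : R -> R) : Prop :=
  forall x, A x -> forall eps, 0 < eps ->
    exists delta, 0 < delta /\
      forall y, A y -> Rabs (y - x) < delta -> Rabs (h y - h x) < eps.

Definition strict_incr_on (A : R -> Prop) (h : R -> R) : Prop :=
  forall x y, A x -> A y -> x < y -> h x < h y.

Definition unit_int (x : R) : Prop := 0 <= x <= 1.

(* K_n indexed from n = 1 (K 0 is unused) *)
Definition pos_to_infty (K : nat -> nat) : Prop :=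
  (forall n, (1 <= n)%nat -> (0 < K n)%nat) /\
  (forall M, exists N, forall n, (N <= n)%nat -> (M <= K n)%nat).

(* K has continuous leading block distribution, and g is the associated f_K^* *)
Definition cont_LBD (K : nat -> nat) (g : R -> R) : Prop :=
  pos_to_infty K /\
  (forall s b, (2 <= s)%nat -> leading_block s b ->
     exists l, is_lim_seq (density_seq (fun k => LB s (K k) b)) (Finite l)) /\
  g 0 = 0 /\ g 1 = 1 /\
  (forall mu, Fstar mu -> mu 0%nat = true ->
     exists L : nat -> R,
       (forall s, is_lim_seq
          (density_seq (fun k => exists b, LB s (K k) b /\ lex_le b (restr mu s) = true))
          (Finite (L s))) /\
       is_lim_seq L (Finite (g (phi * (dotF mu - 1))))) /\
  cont_on unit_int g /\ strict_incr_on unit_int g.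

Definition ge1 (x : R) : Prop := 1 <= x.

Definition fn (f : R -> R) (n : nat) (p : R) : R :=
  (f (INR n + p) - f (INR n)) / (f (INR n + 1) - f (INR n)).

Definition uniform_continuation (f finf : R -> R) : Prop :=
  strict_incr_on ge1 f /\ cont_on ge1 f /\
  (forall n, (1 <= n)%nat -> f (INR n) = INR (fib n)) /\
  (forall eps, 0 < eps -> exists N, forall n p, (N <= n)%nat -> (1 <= n)%nat ->
      unit_int p -> Rabs (fn f n p - finf p) < eps) /\
  strict_incr_on unit_int finf /\ cont_on unit_int finf.

Definition equidistributed (x : nat -> R) : Prop :=
  forall beta, unit_int beta ->
    is_lim_seq (density_seq (fun k => frac_part (x k) <= beta)) (Finite beta).

(* Main.v *)
Require Import Defs.
From Stdlib Require Import Reals Lra Lia ZArith List Bool Classical ClassicalDescription IndefiniteDescription.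
From Coquelicot Require Import Coquelicot.
Open Scope R_scope.

Lemma fib_SS n : fib (S (S n)) = (fib (S n) + fib n)%nat.
Proof. reflexivity. Qed.

Lemma fib_pos n : (1 <= fib n)%nat.
Proof.
  induction n as [n IH] using (well_founded_induction Wf_nat.lt_wf).
  destruct n as [|[|n]]; try (simpl; lia).
  rewrite fib_SS. specialize (IH (S n)). lia.
Qed.

Lemma fib_mono n : (fib n <= fib (S n))%nat.
Proof. destruct n. simpl; lia. rewrite fib_SS. lia. Qed.

Lemma fib_le a b : (a <= b)%nat -> (fib a <= fib b)%nat.
Proof. induction 1. lia. pose proof (fib_mono m). lia. Qed.

Lemma fib_S n : (1 <= n)%nat -> fib (S n) = (fib n + fib (n - 1))%nat.
Proof. intros H. destruct n. lia. rewrite fib_SS. replace (S n - 1)%nat with n by lia. reflexivity. Qed.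

Lemma fib_lt n : (1 <= n)%nat -> (fib n < fib (S n))%nat.
Proof. intros H. rewrite fib_S by lia. pose proof (fib_pos (n-1)). lia. Qed.

Lemma fib_lt2 a b : (1 <= a)%nat -> (a < b)%nat -> (fib a < fib b)%nat.
Proof. intros H1 H2. pose proof (fib_lt a H1). pose proof (fib_le (S a) b H2). lia. Qed.

Lemma fib_ge n : (n <= fib n)%nat.
Proof.
  induction n. simpl; lia. destruct n. simpl. lia.
  pose proof (fib_lt (S n) ltac:(lia)). lia.
Qed.

Lemma sqrt5_sq : sqrt 5 * sqrt 5 = 5.
Proof. apply sqrt_sqrt. lra. Qed.

Lemma sqrt5_bounds : 2 < sqrt 5 < 3.
Proof.
  split.
  - replace 2 with (sqrt 4). apply sqrt_lt_1; lra.
    replace 4 with (2*2) by lra. apply sqrt_square. lra.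
  - replace 3 with (sqrt 9). apply sqrt_lt_1; lra.
    replace 9 with (3*3) by lra. apply sqrt_square. lra.
Qed.

Lemma phi_sq : phi * phi = phi + 1.
Proof. unfold phi. pose proof sqrt5_sq. nra. Qed.

Lemma phi_bounds : 3/2 < phi < 2.
Proof. unfold phi. pose proof sqrt5_bounds. lra. Qed.

Lemma omega_eq : omega = phi - 1.
Proof. unfold omega. pose proof phi_bounds. pose proof phi_sq. field_simplify_eq; nra. Qed.

Lemma omega_bounds : 0 < omega < 1.
Proof. rewrite omega_eq. pose proof phi_bounds. lra. Qed.

Lemma phi_omega : phi * omega = 1.
Proof. unfold omega. pose proof phi_bounds. field. lra. Qed.

Definition psi := 1 - phi.

Lemma fib_binet m : INR (fib (S m)) - phi * INR (fib m) = psi ^ (S m).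
Proof.
  induction m.
  - simpl. unfold psi. lra.
  - rewrite fib_SS, plus_INR. rewrite <- tech_pow_Rmult, <- IHm.
    assert (H : phi*phi*INR (fib m) = (phi+1)*INR (fib m)) by (rewrite phi_sq; ring).
    unfold psi. simpl. lra.
Qed.

Lemma psi_abs : Rabs psi < 1.
Proof. unfold psi. pose proof phi_bounds. rewrite Rabs_left by lra. lra. Qed.

Lemma INR_fib_pos n : 1 <= INR (fib n).
Proof. replace 1 with (INR 1) by reflexivity. apply le_INR, fib_pos. Qed.

Lemma ratio_lim : is_lim_seq (fun m => INR (fib (S m)) / INR (fib m)) phi.
Proof.
  apply is_lim_seq_ext with (fun m => phi + psi ^ (S m) / INR (fib m)).
  { intros m. rewrite <- fib_binet. pose proof (INR_fib_pos m). field. lra. }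
  rewrite <- (Rplus_0_r phi) at 1.
  apply is_lim_seq_plus'. apply is_lim_seq_const.
  apply is_lim_seq_le_le with (fun m => - Rabs psi ^ (S m)) (fun m => Rabs psi ^ (S m)).
  - intros m. pose proof (INR_fib_pos m).
    rewrite RPow_abs.
    assert (Rabs (psi ^ S m / INR (fib m)) <= Rabs (psi ^ S m)).
    { unfold Rdiv. rewrite Rabs_mult. rewrite Rabs_inv. rewrite (Rabs_right (INR _)) by lra.
      pose proof (Rabs_pos (psi ^ S m)).
      assert (/ INR (fib m) <= 1). { rewrite <- Rinv_1. apply Rinv_le_contravar; lra. }
      assert (0 < / INR (fib m)) by (apply Rinv_0_lt_compat; lra). nra. }
    pose proof (Rle_abs (psi ^ S m / INR (fib m))).
    pose proof (Rle_abs (- (psi ^ S m / INR (fib m)))). rewrite Rabs_Ropp in H2. lra.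
  - replace (Finite 0) with (Rbar_opp 0) by (simpl; f_equal; lra). apply -> is_lim_seq_opp.
    apply (is_lim_seq_incr_1 (fun m => Rabs psi ^ m)). apply is_lim_seq_geom. rewrite Rabs_Rabsolu. apply psi_abs.
  - apply (is_lim_seq_incr_1 (fun m => Rabs psi ^ m)). apply is_lim_seq_geom. rewrite Rabs_Rabsolu. apply psi_abs.
Qed.
Lemma zval_rep j e : zval (repeat false j ++ e) = zval e.
Proof. induction j; simpl; auto. Qed.

Lemma zval_rep0 j : zval (repeat false j) = 0%nat.
Proof. rewrite <- (app_nil_r (repeat false j)). rewrite zval_rep. reflexivity. Qed.

Lemma zval_app a c : zval (a ++ c) = (zval (a ++ repeat false (length c)) + zval c)%nat.
Proof.
  induction a as [|x a IH]; simpl.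
  - rewrite zval_rep0. lia.
  - rewrite !length_app, repeat_length, IH. lia.
Qed.

Lemma nocons_tail x t : nocons (x :: t) = true -> nocons t = true.
Proof. destruct t; simpl; auto. intros H. apply andb_prop in H. tauto. Qed.

Lemma nocons_bound e : nocons e = true -> (zval e < fib (S (length e)))%nat.
Proof.
  induction e as [e IH] using (well_founded_induction (Wf_nat.well_founded_ltof _ (@length bool))).
  destruct e as [|x t]; simpl; intros H. lia.
  destruct x.
  - destruct t as [|y t']. simpl. lia.
    destruct y. simpl in H. discriminate.
    assert (H2 : nocons t' = true). { apply (nocons_tail false). apply (nocons_tail true). exact H. }
    assert (Hl : (Wf_nat.ltof _ (@length bool) t' (true :: false :: t'))) by (unfold Wf_nat.ltof; simpl; lia).
    specialize (IH _ Hl H2). simpl. simpl in IH.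
    change (fib (S (S (S (length t'))))) with (fib (S (S (length t'))) + fib (S (length t')))%nat.
    lia.
  - assert (Hl : (Wf_nat.ltof _ (@length bool) t (false :: t))) by (unfold Wf_nat.ltof; simpl; lia).
    specialize (IH _ Hl (nocons_tail _ _ H)). pose proof (fib_mono (S (length t))). change (zval t < fib (S (S (length t))))%nat. lia.
Qed.

Lemma nocons_cons x t : nocons (x :: t) = negb (x && hd false t) && nocons t.
Proof. destruct t; simpl; auto. destruct x; reflexivity. Qed.

Lemma hd_app_rep a j : hd false (a ++ repeat false j) = hd false a.
Proof. destruct a; simpl; auto. destruct j; reflexivity. Qed.

Lemma nocons_app_rep a j : nocons a = true -> nocons (a ++ repeat false j) = true.
Proof.
  induction a as [|x a IH]; intros H.
  - simpl. induction j; [reflexivity|]. change (nocons (false :: repeat false j) = true).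
    rewrite nocons_cons, IHj. reflexivity.
  - rewrite <- app_comm_cons, nocons_cons, hd_app_rep. rewrite nocons_cons in H.
    apply andb_prop in H as [H1 H2]. rewrite H1, (IH H2). reflexivity.
Qed.

Lemma nocons_rep_app j e : nocons e = true -> nocons (repeat false j ++ e) = true.
Proof.
  induction j; intros H; [exact H|]. change (nocons (false :: (repeat false j ++ e)) = true).
  rewrite nocons_cons, (IHj H). reflexivity.
Qed.

Lemma nocons_app_l a b : nocons (a ++ b) = true -> nocons a = true.
Proof.
  induction a as [|x a IH]; intros H; [reflexivity|]. rewrite <- app_comm_cons, nocons_cons in H.
  rewrite nocons_cons.
  apply andb_prop in H as [H1 H2]. rewrite (IH H2). destruct a; simpl in *.
  destruct x; reflexivity. rewrite H1; reflexivity.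
Qed.

Lemma zeck_len m e : is_zeck m e -> (fib (length e) <= m < fib (S (length e)))%nat.
Proof.
  intros [H1 [H2 H3]]. subst m. split.
  - destruct e as [|x t]. simpl in H1; discriminate. simpl in H1. subst x. simpl. lia.
  - apply nocons_bound; auto.
Qed.

Lemma zeck_len_pos m e : is_zeck m e -> (1 <= length e)%nat.
Proof. intros [H1 _]. destruct e; simpl in *; [discriminate|lia]. Qed.

Lemma len_uniq m a b : (fib a <= m < fib (S a))%nat -> (fib b <= m < fib (S b))%nat -> a = b.
Proof.
  intros H1 H2. destruct (Nat.lt_trichotomy a b) as [H|[H|H]]; auto.
  - pose proof (fib_le (S a) b H). lia.
  - pose proof (fib_le (S b) a H). lia.
Qed.

Lemma exists_n m : (1 <= m)%nat -> exists n, (1 <= n)%nat /\ (fib n <= m < fib (S n))%nat.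
Proof.
  induction m; intros H. lia.
  destruct m. exists 1%nat. simpl. lia.
  destruct IHm as [n [Hn1 Hn2]]. lia.
  destruct (Nat.eq_dec (S (S m)) (fib (S n))) as [E|E].
  - exists (S n). split. lia. pose proof (fib_lt (S n) ltac:(lia)). lia.
  - exists n. split; auto. lia.
Qed.

Lemma zeck_exists m : (1 <= m)%nat -> exists e, is_zeck m e.
Proof.
  induction m as [m IH] using (well_founded_induction Wf_nat.lt_wf). intros Hm.
  destruct (exists_n m Hm) as [n [Hn1 Hn2]].
  rewrite fib_S in Hn2 by lia.
  destruct (Nat.eq_dec m (fib n)) as [E|E].
  - exists (true :: repeat false (n - 1)). split; [reflexivity|split].
    + rewrite nocons_cons. rewrite <- (app_nil_r (repeat false (n-1))). rewrite nocons_rep_app by reflexivity.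
      rewrite app_nil_r. destruct (n-1)%nat; reflexivity.
    + change (zval (true :: repeat false (n - 1))) with (fib (S (length (repeat false (n-1)))) + zval (repeat false (n-1)))%nat.
      rewrite zval_rep0, repeat_length. replace (S (n-1)) with n by lia. lia.
  - destruct (IH (m - fib n)%nat ltac:(pose proof (fib_pos n); lia) ltac:(lia)) as [e' He'].
    pose proof (zeck_len _ _ He') as HL.
    assert (HL2 : (length e' < n - 1)%nat).
    { destruct (Nat.lt_ge_cases (length e') (n-1)); auto. pose proof (fib_le (n-1) (length e') H). lia. }
    exists (true :: (repeat false (n - 1 - length e') ++ e')).
    destruct He' as [Ha [Hb Hc]].
    split; [reflexivity|split].
    + rewrite nocons_cons, (nocons_rep_app _ _ Hb). destruct (n - 1 - length e')%nat eqn:Q. lia. reflexivity.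
    + change (zval (true :: (repeat false (n - 1 - length e') ++ e'))) with (fib (S (length (repeat false (n - 1 - length e') ++ e'))) + zval (repeat false (n - 1 - length e') ++ e'))%nat.
      rewrite zval_rep, length_app, repeat_length, Hc.
      replace (S (n - 1 - length e' + length e')) with n by lia. lia.
Qed.

Lemma lex_total a b : length a = length b -> lex_le a b = false -> lex_le b a = true.
Proof.
  revert b. induction a as [|x a IH]; intros [|y b] Hl H; simpl in *; try discriminate; try lia.
  destruct x, y; auto.
Qed.

Lemma zval_mono p q j : length p = length q -> nocons p = true -> lex_le p q = true ->
  (zval (p ++ repeat false j) <= zval (q ++ repeat false j))%nat.
Proof.
  revert q. induction p as [|x p IH]; intros [|y q] Hl Hn H; try (simpl in Hl; discriminate).
  - apply Nat.le_refl.
  - injection Hl as Hl.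
    rewrite nocons_cons in Hn. apply andb_prop in Hn as [_ Hn].
    rewrite <- !app_comm_cons. cbn [zval]. cbn [lex_le] in H.
    rewrite !length_app, !repeat_length. rewrite Hl.
    destruct x, y; try discriminate.
    + specialize (IH q Hl Hn H). lia.
    + pose proof (nocons_bound (p ++ repeat false j) (nocons_app_rep _ _ Hn)).
      rewrite length_app, repeat_length, Hl in H0. lia.
    + specialize (IH q Hl Hn H). lia.
Qed.
Fixpoint Wl (l : list bool) : R :=
  match l with nil => 0 | x :: t => (if x then 1 else 0) + omega * Wl t end.

Definition V (b : list bool) (n : nat) : nat := zval (b ++ repeat false (n - length b)).

Lemma V_cons x b m : (length b <= m)%nat ->
  V (x :: b) (S m) = ((if x then fib (S m) else 0) + V b m)%nat.
Proof.
  intros H. unfold V. rewrite <- app_comm_cons. cbn [zval length].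
  replace (S m - S (length b))%nat with (m - length b)%nat by lia.
  rewrite length_app, repeat_length. replace (length b + (m - length b))%nat with m by lia.
  reflexivity.
Qed.

Lemma V_nil m : V nil m = 0%nat.
Proof. unfold V. simpl. apply zval_rep0. Qed.

Lemma ratio_lim_inv : is_lim_seq (fun m => INR (fib m) / INR (fib (S m))) omega.
Proof.
  apply is_lim_seq_ext with (fun m => / (INR (fib (S m)) / INR (fib m))).
  { intros m. pose proof (INR_fib_pos m). pose proof (INR_fib_pos (S m)). field. lra. }
  replace (Finite omega) with (Rbar_inv phi) by reflexivity.
  apply is_lim_seq_inv. apply ratio_lim. pose proof phi_bounds. intros E. injection E. lra.
Qed.

Lemma V_lim b : is_lim_seq (fun m => INR (V b (S m)) / INR (fib m)) (phi * Wl b).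
Proof.
  induction b as [|x b IH].
  - apply is_lim_seq_ext with (fun _ => 0).
    { intros m. rewrite V_nil. simpl. unfold Rdiv. ring. }
    simpl. rewrite Rmult_0_r. apply is_lim_seq_const.
  - apply is_lim_seq_ext_loc with
      (fun m => (if x then 1 else 0) * (INR (fib (S m)) / INR (fib m)) +
                (INR (V b (S (pred m))) / INR (fib (pred m))) * (INR (fib (pred m)) / INR (fib (S (pred m))))).
    { exists (S (length b)). intros n Hn. destruct n as [|m]. lia. simpl pred.
      rewrite V_cons by lia. rewrite plus_INR.
      pose proof (INR_fib_pos m). pose proof (INR_fib_pos (S m)).
      destruct x; [|change (INR 0) with 0]; field; lra. }
    replace (phi * Wl (x :: b)) with ((if x then 1 else 0) * phi + (phi * Wl b) * omega).
    2:{ simpl. ring. }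
    apply is_lim_seq_plus'. apply is_lim_seq_mult'. apply is_lim_seq_const. apply ratio_lim.
    apply (is_lim_seq_incr_1 (fun m => INR (V b (S (pred m))) / INR (fib (pred m)) * (INR (fib (pred m)) / INR (fib (S (pred m)))))).
    simpl pred. apply is_lim_seq_mult'. apply IH. apply ratio_lim_inv.
Qed.
Fixpoint greedy (r w : R) (N : nat) : list bool :=
  match N with
  | O => nil
  | S N' => if Rle_dec w r then true :: greedy (r - w) (w * omega) N'
            else false :: greedy r (w * omega) N'
  end.

Lemma greedy_spec N : forall r w, 0 < w -> 0 <= r < w * phi ->
  nocons (greedy r w N) = true /\ (r < w -> hd false (greedy r w N) = false) /\
  0 <= r - w * Wl (greedy r w N) < w * phi * omega ^ N.
Proof.
  pose proof phi_omega as Hpo. pose proof omega_bounds as Hob. pose proof phi_bounds as Hpb.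
  induction N as [|N IH]; intros r w Hw Hr.
  - simpl. repeat split; auto; lra.
  - simpl greedy. destruct (Rle_dec w r) as [Hle|Hlt].
    + assert (Hw' : 0 < w * omega) by nra.
      assert (Hr' : 0 <= r - w < w * omega * phi).
      { rewrite omega_eq. split. lra. rewrite omega_eq in Hpo. nra. }
      assert (Hr'' : r - w < w * omega).
      { rewrite omega_eq. rewrite omega_eq in Hpo. nra. }
      destruct (IH (r - w) (w * omega) Hw' Hr') as [H1 [H2 H3]].
      specialize (H2 Hr'').
      repeat split.
      * rewrite nocons_cons, H2, H1. reflexivity.
      * intros; lra.
      * simpl Wl. nra.
      * simpl Wl. simpl pow. nra.
    + assert (Hw' : 0 < w * omega) by nra.
      assert (Hr' : 0 <= r < w * omega * phi) by nra.
      destruct (IH r (w * omega) Hw' Hr') as [H1 [H2 H3]].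
      repeat split.
      * rewrite nocons_cons, H1. reflexivity.
      * simpl Wl. nra.
      * simpl Wl. simpl pow. nra.
Qed.

Lemma approx alpha eta : 0 <= alpha < 1 -> 0 < eta ->
  exists l, hd false l = true /\ nocons l = true /\ 0 <= alpha - phi * (Wl l - 1) < eta.
Proof.
  intros Ha He.
  pose proof phi_omega as Hpo. pose proof omega_bounds as Hob. pose proof phi_bounds as Hpb.
  destruct (pow_lt_1_zero omega ltac:(rewrite Rabs_right; lra) eta He) as [N HN].
  specialize (HN N (le_n _)). rewrite Rabs_right in HN by (apply Rle_ge, pow_le; lra).
  destruct (greedy_spec N (alpha * omega) (omega * omega) ltac:(nra) ltac:(split; nra)) as [H1 [_ H3]].
  exists (true :: false :: greedy (alpha * omega) (omega * omega) N).
  split; [reflexivity|split].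
  - rewrite nocons_cons, nocons_cons, H1. reflexivity.
  - set (G := Wl (greedy (alpha * omega) (omega * omega) N)) in *.
    assert (E : alpha - phi * (Wl (true :: false :: greedy (alpha * omega) (omega * omega) N) - 1) = phi * (alpha * omega - omega * omega * G)).
    { simpl Wl. fold G.
      replace (alpha) with (alpha * (phi * omega)) at 1 by (rewrite Hpo; ring). ring. }
    rewrite E. split. nra.
    assert (phi * (omega * omega * phi * omega ^ N) = omega ^ N).
    { replace (phi * (omega * omega * phi * omega ^ N)) with ((phi * omega) * (phi * omega) * omega ^ N) by ring.
      rewrite Hpo. ring. }
    nra.
Qed.

Definition mu_of (l : list bool) (i : nat) : bool := nth i l false.

Lemma mu_of_nocons l : nocons l = true -> forall i, ~ (mu_of l i = true /\ mu_of l (S i) = true).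
Proof.
  unfold mu_of. induction l as [|x t IH]; intros H i [H1 H2].
  - destruct i; discriminate.
  - rewrite nocons_cons in H. apply andb_prop in H as [Ha Hb].
    destruct i as [|i].
    + simpl in H1, H2. subst x. destruct t; simpl in *; try discriminate. subst b. discriminate.
    + apply (IH Hb i). split; auto.
Qed.

Lemma mu_of_Fstar l : nocons l = true -> Fstar (mu_of l).
Proof.
  intros H. split. apply mu_of_nocons; auto.
  intros [N HN]. destruct (HN (length l)) as [H1 _]. unfold mu_of in H1.
  rewrite nth_overflow in H1 by lia. discriminate.
Qed.

Lemma restr_mu_of l s : (length l <= s)%nat -> restr (mu_of l) s = l ++ repeat false (s - length l).
Proof.
  intros Hs. unfold restr, mu_of. apply nth_ext with false false.
  - rewrite length_map, length_seq, length_app, repeat_length. lia.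
  - intros i Hi. rewrite length_map, length_seq in Hi.
    rewrite (nth_indep _ false (nth 0 l false)) by (rewrite length_map, length_seq; lia).
    rewrite (map_nth (fun i0 => nth i0 l false)). rewrite seq_nth by lia. simpl.
    destruct (Nat.lt_ge_cases i (length l)).
    + rewrite app_nth1; auto.
    + rewrite app_nth2 by auto. rewrite nth_repeat. apply nth_overflow; auto.
Qed.

Lemma is_series_zero : is_series (fun _ : nat => 0) 0.
Proof.
  apply is_series_Reals. intros eps He. exists 0%nat. intros n _.
  rewrite sum_cte. unfold R_dist. rewrite Rmult_0_l, Rminus_0_r, Rabs_R0. exact He.
Qed.

Lemma dotF_mu_of l : dotF (mu_of l) = Wl l.
Proof.
  unfold dotF. apply is_series_unique. unfold mu_of.
  induction l as [|x t IH].
  - eapply is_series_ext; [|apply is_series_zero]. intros n. simpl. destruct n; reflexivity.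
  - apply is_series_decr_1.
    pose proof (@is_series_scal R_AbsRing R_NormedModule omega _ _ IH) as H.
    match goal with |- is_series _ ?L => replace L with (scal omega (Wl t)) end.
    + eapply is_series_ext; [|exact H]. intros k. simpl. unfold scal; simpl; unfold mult; simpl.
      destruct (nth k t false); ring.
    + unfold scal, plus, opp; simpl; unfold mult; simpl. unfold plus, opp; simpl. destruct x; ring.
Qed.
Lemma count_le (P : nat -> Prop) n : (count_upto P n <= n)%nat.
Proof. induction n. simpl; lia. cbn [count_upto]. destruct (ClassicalDescription.excluded_middle_informative (P (S n))); lia. Qed.

Lemma count_ext (P Q : nat -> Prop) n : (forall k, (1 <= k)%nat -> (P k <-> Q k)) ->
  count_upto P n = count_upto Q n.
Proof.
  intros H. induction n. reflexivity. cbn [count_upto]. rewrite IHn.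
  destruct (ClassicalDescription.excluded_middle_informative (P (S n))) as [A|A], (ClassicalDescription.excluded_middle_informative (Q (S n))) as [B|B]; auto.
  - exfalso. apply B. apply (H (S n)); auto; lia.
  - exfalso. apply A. apply (H (S n)); auto; lia.
Qed.

Lemma count_impl (P Q : nat -> Prop) N0 n : (forall k, (N0 <= k)%nat -> P k -> Q k) ->
  (count_upto P n <= count_upto Q n + N0)%nat.
Proof.
  intros H. induction n. simpl. lia. cbn [count_upto].
  destruct (Nat.le_gt_cases N0 (S n)).
  - destruct (ClassicalDescription.excluded_middle_informative (P (S n))) as [A|A], (ClassicalDescription.excluded_middle_informative (Q (S n))) as [B|B]; try lia.
    exfalso. apply B. apply H; auto.
  - pose proof (count_le P (S n)) as H1. cbn [count_upto] in H1.
    destruct (ClassicalDescription.excluded_middle_informative (P (S n))), (ClassicalDescription.excluded_middle_informative (Q (S n))); lia.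
Qed.

Lemma density_bounds (P : nat -> Prop) n : 0 <= density_seq P n <= 1.
Proof.
  unfold density_seq. destruct n. simpl. unfold Rdiv. rewrite Rmult_0_l. lra.
  pose proof (count_le P (S n)). apply le_INR in H. pose proof (pos_INR (count_upto P (S n))).
  assert (0 < INR (S n)) by (apply lt_0_INR; lia).
  split. apply Rdiv_le_0_compat; lra.
  unfold Rdiv. apply (Rmult_le_reg_r (INR (S n))); [lra|]. rewrite Rmult_assoc, Rinv_l by lra. lra.
Qed.

Lemma inv_n_lim (c : R) : is_lim_seq (fun n => c / INR n) 0.
Proof.
  replace 0 with (c * 0) by ring. apply is_lim_seq_mult'. apply is_lim_seq_const.
  replace (Finite 0) with (Rbar_inv p_infty) by reflexivity.
  apply is_lim_seq_inv. apply is_lim_seq_INR. discriminate.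
Qed.

Lemma dens_upper (P Q : nat -> Prop) N0 (Lq : R) :
  (forall k, (N0 <= k)%nat -> P k -> Q k) -> is_lim_seq (density_seq Q) Lq ->
  forall eps, 0 < eps -> exists N, forall n, (N <= n)%nat -> density_seq P n < Lq + eps.
Proof.
  intros H HQ eps He.
  assert (Hl : is_lim_seq (fun n => density_seq Q n + INR N0 / INR n) (Lq + 0)).
  { apply is_lim_seq_plus'. exact HQ. apply inv_n_lim. }
  apply is_lim_seq_spec in Hl. destruct (Hl (mkposreal eps He)) as [N HN].
  exists (S N). intros n Hn. specialize (HN n ltac:(lia)). simpl in HN.
  apply Rabs_lt_between in HN.
  assert (density_seq P n <= density_seq Q n + INR N0 / INR n).
  { unfold density_seq. assert (0 < INR n) by (apply lt_0_INR; lia).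
    pose proof (count_impl P Q N0 n H). apply le_INR in H1. rewrite plus_INR in H1.
    unfold Rdiv. rewrite <- Rmult_plus_distr_r. apply Rmult_le_compat_r.
    left. apply Rinv_0_lt_compat. lra. lra. }
  lra.
Qed.

Lemma dens_lower (P Q : nat -> Prop) N0 (Lq : R) :
  (forall k, (N0 <= k)%nat -> Q k -> P k) -> is_lim_seq (density_seq Q) Lq ->
  forall eps, 0 < eps -> exists N, forall n, (N <= n)%nat -> Lq - eps < density_seq P n.
Proof.
  intros H HQ eps He.
  assert (Hl : is_lim_seq (fun n => density_seq Q n - INR N0 / INR n) (Lq - 0)).
  { apply is_lim_seq_minus'. exact HQ. apply inv_n_lim. }
  apply is_lim_seq_spec in Hl. destruct (Hl (mkposreal eps He)) as [N HN].
  exists (S N). intros n Hn. specialize (HN n ltac:(lia)). simpl in HN.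
  apply Rabs_lt_between in HN.
  assert (density_seq Q n - INR N0 / INR n <= density_seq P n).
  { unfold density_seq. assert (0 < INR n) by (apply lt_0_INR; lia).
    pose proof (count_impl Q P N0 n H). apply le_INR in H1. rewrite plus_INR in H1.
    unfold Rdiv. rewrite <- Rmult_minus_distr_r. apply Rmult_le_compat_r.
    left. apply Rinv_0_lt_compat. lra. lra. }
  lra.
Qed.

Lemma squeeze (D : nat -> R) c :
  (forall eps, 0 < eps -> exists N, forall n, (N <= n)%nat -> D n < c + eps) ->
  (forall eps, 0 < eps -> exists N, forall n, (N <= n)%nat -> c - eps < D n) ->
  is_lim_seq D c.
Proof.
  intros H1 H2. apply is_lim_seq_spec. intros [eps He].
  destruct (H1 eps He) as [N1 HN1]. destruct (H2 eps He) as [N2 HN2].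
  exists (max N1 N2). intros n Hn. simpl. apply Rabs_lt_between.
  specialize (HN1 n ltac:(lia)). specialize (HN2 n ltac:(lia)). lra.
Qed.
Definition tt (K : nat -> nat) (e : nat -> list bool) (k : nat) : R :=
  (INR (K k) - INR (fib (length (e k)))) / INR (fib (length (e k) - 1)).

Definition Qs (K : nat -> nat) (mu : nat -> bool) (s k : nat) : Prop :=
  exists b, LB s (K k) b /\ lex_le b (restr mu s) = true.

Lemma nk_large K e (HK : pos_to_infty K) (He : forall k, (1 <= k)%nat -> is_zeck (K k) (e k)) M :
  exists N0, forall k, (N0 <= k)%nat -> (1 <= k)%nat /\ (M <= length (e k))%nat.
Proof.
  destruct HK as [_ HK]. destruct (HK (fib M)) as [N HN].
  exists (max N 1). intros k Hk. split. lia.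
  specialize (HN k ltac:(lia)). pose proof (zeck_len _ _ (He k ltac:(lia))).
  destruct (Nat.le_gt_cases M (length (e k))); auto.
  pose proof (fib_le (S (length (e k))) M H0). lia.
Qed.

Lemma Wl_app_rep l j : Wl (l ++ repeat false j) = Wl l.
Proof. induction l as [|x l IH]; simpl. induction j; simpl; auto. rewrite IHj; ring. rewrite IH; auto. Qed.

Lemma Wl_rep_app j l : Wl (repeat false j ++ l) = omega ^ j * Wl l.
Proof. induction j; simpl. ring. rewrite IHj. ring. Qed.

Lemma Wl_nonneg l : 0 <= Wl l.
Proof. pose proof omega_bounds. induction l as [|x l IH]; simpl. lra. destruct x; nra. Qed.

Lemma K_split m e s : is_zeck m e -> (s <= length e)%nat ->
  m = (zval (firstn s e ++ repeat false (length e - s)) + zval (skipn s e))%nat.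
Proof.
  intros [_ [_ Hz]] Hs. rewrite <- Hz at 1. rewrite <- (firstn_skipn s e) at 1.
  rewrite zval_app, length_skipn. reflexivity.
Qed.

Lemma nocons_app_r a b : nocons (a ++ b) = true -> nocons b = true.
Proof. induction a as [|x a IH]; simpl; auto. intros H. apply IH. apply (nocons_tail x). exact H. Qed.

Lemma length_restr mu s : length (restr mu s) = s.
Proof. unfold restr. rewrite length_map, length_seq. reflexivity. Qed.

Lemma incl_upper K e l s alpha (HK : pos_to_infty K) (He : forall k, (1 <= k)%nat -> is_zeck (K k) (e k)) :
  nocons l = true -> (length l <= s)%nat -> alpha < phi * (Wl l - 1) ->
  exists N0, forall k, (N0 <= k)%nat -> tt K e k <= alpha -> Qs K (mu_of l) s k.
Proof.
  intros Hl Hls Ha.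
  set (b0 := restr (mu_of l) s).
  assert (Hb0 : b0 = l ++ repeat false (s - length l)) by (apply restr_mu_of; auto).
  assert (Hlb0 : length b0 = s) by apply length_restr.
  assert (Hnb0 : nocons b0 = true) by (rewrite Hb0; apply nocons_app_rep; auto).
  assert (HW : Wl b0 = Wl l) by (rewrite Hb0; apply Wl_app_rep).
  assert (Hlim : is_lim_seq (fun m => INR (V b0 (S m)) / INR (fib m) - INR (fib (S m)) / INR (fib m)) (phi * Wl b0 - phi)).
  { apply is_lim_seq_minus'. apply V_lim. apply ratio_lim. }
  apply is_lim_seq_spec in Hlim.
  assert (Heps : 0 < phi * (Wl l - 1) - alpha) by lra.
  destruct (Hlim (mkposreal _ Heps)) as [M1 HM1]. cbn [pos] in HM1.
  destruct (nk_large K e HK He (S M1 + s)) as [N0 HN0].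
  exists N0. intros k Hk Ht.
  destruct (HN0 k Hk) as [Hk1 Hnk].
  pose proof (He k Hk1) as Hz.
  destruct (length (e k)) as [|m] eqn:En. lia.
  specialize (HM1 m ltac:(lia)). apply Rabs_lt_between in HM1. rewrite HW in HM1.
  exists (firstn s (e k)). split.
  { exists (e k). split; auto. split; [lia|reflexivity]. }
  destruct (lex_le (firstn s (e k)) b0) eqn:E; auto. exfalso.
  assert (Hlf : length (firstn s (e k)) = s) by (rewrite length_firstn; lia).
  pose proof (lex_total (firstn s (e k)) b0 ltac:(lia) E) as E2.
  pose proof (zval_mono b0 (firstn s (e k)) (S m - s) ltac:(lia) Hnb0 E2) as Hm.
  pose proof (K_split _ _ s Hz ltac:(lia)) as Hs. rewrite En in Hs.
  assert (HV : (V b0 (S m) <= K k)%nat).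
  { unfold V. rewrite Hlb0. lia. }
  unfold tt in Ht. rewrite En in Ht. replace (S m - 1)%nat with m in Ht by lia.
  apply le_INR in HV.
  pose proof (INR_fib_pos m).
  assert ((INR (V b0 (S m)) - INR (fib (S m))) / INR (fib m) <= (INR (K k) - INR (fib (S m))) / INR (fib m)).
  { unfold Rdiv. apply Rmult_le_compat_r. left; apply Rinv_0_lt_compat; lra. lra. }
  assert (INR (V b0 (S m)) / INR (fib m) - INR (fib (S m)) / INR (fib m) = (INR (V b0 (S m)) - INR (fib (S m))) / INR (fib m)).
  { field. lra. }
  lra.
Qed.

Lemma V_c s n : (1 <= s)%nat -> (s <= n)%nat -> V (repeat false (s - 1) ++ true :: nil) n = fib (S (n - s)).
Proof.
  intros H1 H2. unfold V. rewrite length_app, repeat_length. simpl length.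
  replace (s - 1 + 1)%nat with s by lia.
  rewrite <- app_assoc. rewrite zval_rep. simpl app.
  cbn [zval]. rewrite repeat_length, zval_rep0. lia.
Qed.

Lemma Wl_c s : Wl (repeat false s ++ true :: nil) = omega ^ s.
Proof. rewrite Wl_rep_app. simpl. ring. Qed.

Lemma incl_lower K e l s alpha (HK : pos_to_infty K) (He : forall k, (1 <= k)%nat -> is_zeck (K k) (e k)) :
  nocons l = true -> (length l <= s)%nat -> (1 <= s)%nat ->
  phi * (Wl l - 1) + phi * omega ^ (s - 1) < alpha ->
  exists N0, forall k, (N0 <= k)%nat -> Qs K (mu_of l) s k -> tt K e k <= alpha.
Proof.
  intros Hl Hls Hs1 Ha.
  set (b0 := restr (mu_of l) s).
  set (c := repeat false (s - 1) ++ true :: nil).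
  assert (Hb0 : b0 = l ++ repeat false (s - length l)) by (apply restr_mu_of; auto).
  assert (Hlb0 : length b0 = s) by apply length_restr.
  assert (HW : Wl b0 = Wl l) by (rewrite Hb0; apply Wl_app_rep).
  assert (Hlim : is_lim_seq (fun m => INR (V b0 (S m)) / INR (fib m) + INR (V c (S m)) / INR (fib m) - INR (fib (S m)) / INR (fib m)) (phi * Wl b0 + phi * Wl c - phi)).
  { apply is_lim_seq_minus'. apply is_lim_seq_plus'. apply V_lim. apply V_lim. apply ratio_lim. }
  apply is_lim_seq_spec in Hlim.
  assert (Heps : 0 < alpha - (phi * (Wl l - 1) + phi * omega ^ (s - 1))) by lra.
  destruct (Hlim (mkposreal _ Heps)) as [M1 HM1]. cbn [pos] in HM1.
  destruct (nk_large K e HK He (S M1 + s)) as [N0 HN0].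
  exists N0. intros k Hk [b [[e' [Hz' [Hse' Hb]]] Hlex]].
  destruct (HN0 k Hk) as [Hk1 Hnk].
  pose proof (He k Hk1) as Hz.
  assert (Elen : length e' = length (e k)).
  { apply (len_uniq (K k)); apply zeck_len; auto. }
  destruct (length (e k)) as [|m] eqn:En. lia.
  specialize (HM1 m ltac:(lia)). apply Rabs_lt_between in HM1. rewrite HW in HM1.
  assert (HWc : Wl c = omega ^ (s - 1)) by apply Wl_c. rewrite HWc in HM1.
  pose proof (K_split _ _ s Hz' Hse') as Hs. rewrite Elen, Hb in Hs.
  assert (Hnz : nocons e' = true) by (destruct Hz' as [_ [Hz' _]]; exact Hz').
  rewrite <- (firstn_skipn s e') in Hnz.
  assert (Hnb : nocons b = true) by (rewrite <- Hb; eapply nocons_app_l; exact Hnz).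
  assert (Hlb : length b = s) by (rewrite <- Hb, length_firstn; lia).
  pose proof (zval_mono b b0 (S m - s) ltac:(lia) Hnb Hlex) as Hm.
  pose proof (nocons_bound _ (nocons_app_r _ _ Hnz)) as Hsk.
  rewrite length_skipn, Elen in Hsk.
  assert (HV : (K k < V b0 (S m) + V c (S m))%nat).
  { unfold c. rewrite V_c by lia. unfold V at 1. rewrite Hlb0. lia. }
  unfold tt. rewrite En. replace (S m - 1)%nat with m by lia.
  apply lt_INR in HV. rewrite plus_INR in HV.
  pose proof (INR_fib_pos m).
  assert ((INR (K k) - INR (fib (S m))) / INR (fib m) <= (INR (V b0 (S m)) + INR (V c (S m)) - INR (fib (S m))) / INR (fib m)).
  { unfold Rdiv. apply Rmult_le_compat_r. left; apply Rinv_0_lt_compat; lra. lra. }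
  assert (INR (V b0 (S m)) / INR (fib m) + INR (V c (S m)) / INR (fib m) - INR (fib (S m)) / INR (fib m) = (INR (V b0 (S m)) + INR (V c (S m)) - INR (fib (S m))) / INR (fib m)).
  { field. lra. }
  lra.
Qed.
Lemma g_mono (g : R -> R) : strict_incr_on unit_int g ->
  forall x y, unit_int x -> unit_int y -> x <= y -> g x <= g y.
Proof.
  intros gi x y Hx Hy Hxy. destruct (Req_dec x y). subst; lra. left. apply gi; auto. lra.
Qed.

Lemma mu_of_0 l : hd false l = true -> mu_of l 0 = true.
Proof. destruct l; simpl; auto. Qed.

Lemma Wl_ge1 l : hd false l = true -> 1 <= Wl l.
Proof.
  destruct l as [|x t]; simpl; intros H. discriminate. subst x.
  pose proof (Wl_nonneg t). pose proof omega_bounds. nra.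
Qed.

Lemma key K g e (HK : pos_to_infty K)
  (Hmu : forall mu, Fstar mu -> mu 0%nat = true ->
     exists L : nat -> R,
       (forall s, is_lim_seq
          (density_seq (fun k => exists b, LB s (K k) b /\ lex_le b (restr mu s) = true))
          (Finite (L s))) /\
       is_lim_seq L (Finite (g (phi * (dotF mu - 1)))))
  (g0 : g 0 = 0) (g1 : g 1 = 1) (gc : cont_on unit_int g) (gi : strict_incr_on unit_int g)
  (He : forall k, (1 <= k)%nat -> is_zeck (K k) (e k))
  alpha (Ha : 0 <= alpha <= 1) :
  is_lim_seq (density_seq (fun k => tt K e k <= alpha)) (g alpha).
Proof.
  pose proof phi_bounds as Hpb. pose proof omega_bounds as Hob.
  apply squeeze.
  - intros eps Heps.
    destruct (Req_dec alpha 1) as [E|Ha1].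
    + exists 0%nat. intros n _. pose proof (density_bounds (fun k => tt K e k <= alpha) n). subst. rewrite g1. lra.
    + assert (Hal : alpha < 1) by lra.
      destruct (gc alpha Ha (eps/3) ltac:(lra)) as [delta [Hd Hcont]].
      set (eta := Rmin delta (1 - alpha) / 2).
      assert (Heta1 : 0 < eta) by (unfold eta, Rmin; destruct (Rle_dec delta (1 - alpha)); lra).
      assert (Heta2 : eta <= delta / 2) by (unfold eta; pose proof (Rmin_l delta (1 - alpha)); lra).
      assert (Heta3 : eta <= (1 - alpha) / 2) by (unfold eta; pose proof (Rmin_r delta (1 - alpha)); lra).
      destruct (approx (alpha + eta) (eta / 2) ltac:(lra) ltac:(lra)) as [l [Hhd [Hnl Hy]]].
      set (y := phi * (Wl l - 1)) in *.
      assert (Hgy : Rabs (g y - g alpha) < eps / 3).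
      { apply Hcont. unfold unit_int; lra. rewrite Rabs_right; lra. }
      destruct (Hmu (mu_of l) (mu_of_Fstar l Hnl) (mu_of_0 l Hhd)) as [L [HL1 HL2]].
      rewrite dotF_mu_of in HL2. fold y in HL2.
      apply is_lim_seq_spec in HL2. destruct (HL2 (mkposreal (eps/3) ltac:(lra))) as [s0 Hs0].
      cbn [pos] in Hs0.
      set (s := max s0 (length l)).
      destruct (incl_upper K e l s alpha HK He Hnl ltac:(unfold s; lia) ltac:(fold y; lra)) as [N0 HN0].
      destruct (dens_upper _ _ N0 (L s) HN0 (HL1 s) (eps/3) ltac:(lra)) as [N HN].
      exists N. intros n Hn. specialize (HN n Hn). specialize (Hs0 s ltac:(unfold s; lia)).
      apply Rabs_lt_between in Hs0. apply Rabs_lt_between in Hgy. lra.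
  - intros eps Heps.
    destruct (Req_dec alpha 0) as [E|Ha0].
    + exists 0%nat. intros n _. pose proof (density_bounds (fun k => tt K e k <= alpha) n). subst. rewrite g0. lra.
    + assert (Hal : 0 < alpha) by lra.
      destruct (gc alpha Ha (eps/3) ltac:(lra)) as [delta [Hd Hcont]].
      set (eta := Rmin delta alpha / 2).
      assert (Heta1 : 0 < eta) by (unfold eta; unfold Rmin; destruct (Rle_dec delta alpha); lra).
      assert (Heta2 : eta <= delta / 2) by (unfold eta; pose proof (Rmin_l delta alpha); lra).
      assert (Heta3 : eta <= alpha / 2) by (unfold eta; pose proof (Rmin_r delta alpha); lra).
      destruct (approx (alpha - eta) (eta / 2) ltac:(lra) ltac:(lra)) as [l [Hhd [Hnl Hy]]].
      set (y := phi * (Wl l - 1)) in *.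
      assert (Hy0 : 0 <= y) by (unfold y; pose proof (Wl_ge1 l Hhd); nra).
      assert (Hgy : Rabs (g y - g alpha) < eps / 3).
      { apply Hcont. unfold unit_int; lra. rewrite Rabs_left; lra. }
      destruct (Hmu (mu_of l) (mu_of_Fstar l Hnl) (mu_of_0 l Hhd)) as [L [HL1 HL2]].
      rewrite dotF_mu_of in HL2. fold y in HL2.
      apply is_lim_seq_spec in HL2. destruct (HL2 (mkposreal (eps/3) ltac:(lra))) as [s0 Hs0].
      cbn [pos] in Hs0.
      destruct (pow_lt_1_zero omega ltac:(rewrite Rabs_right; lra) ((alpha - y) / phi) ltac:(apply Rdiv_lt_0_compat; lra)) as [N1 HN1].
      set (s := S (max N1 (max s0 (length l)))).
      assert (Hpow : phi * omega ^ (s - 1) < alpha - y).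
      { specialize (HN1 (s - 1)%nat ltac:(unfold s; lia)).
        rewrite Rabs_right in HN1 by (apply Rle_ge, pow_le; lra).
        apply (Rmult_lt_compat_l phi) in HN1; [|lra].
        replace (phi * ((alpha - y) / phi)) with (alpha - y) in HN1 by (field; lra). exact HN1. }
      destruct (incl_lower K e l s alpha HK He Hnl ltac:(unfold s; lia) ltac:(unfold s; lia) ltac:(fold y; lra)) as [N0 HN0].
      destruct (dens_lower _ _ N0 (L s) HN0 (HL1 s) (eps/3) ltac:(lra)) as [N HN].
      exists N. intros n Hn. specialize (HN n Hn). specialize (Hs0 s ltac:(unfold s; lia)).
      apply Rabs_lt_between in Hs0. apply Rabs_lt_between in Hgy. lra.
Qed.
Definition clamp (x : R) : R := Rmax 0 (Rmin 1 x).

Lemma clamp_unit x : unit_int (clamp x).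
Proof. unfold clamp, unit_int, Rmax, Rmin. repeat destruct Rle_dec; lra. Qed.

Lemma clamp_id x : unit_int x -> clamp x = x.
Proof. unfold clamp, unit_int, Rmax, Rmin. intros. repeat destruct Rle_dec; lra. Qed.

Lemma clamp_lip x y : Rabs (clamp y - clamp x) <= Rabs (y - x).
Proof.
  unfold clamp, Rmax, Rmin. repeat destruct Rle_dec;
  unfold Rabs; repeat destruct Rcase_abs; lra.
Qed.

Lemma g_inv_ex (g : R -> R) : g 0 = 0 -> g 1 = 1 -> cont_on unit_int g ->
  forall y, exists x, (0 <= y <= 1 -> 0 <= x <= 1 /\ g x = y).
Proof.
  intros g0 g1 gc y.
  destruct (Rle_dec 0 y) as [Hy0|Hy0]; [|exists 0; intros; lra].
  destruct (Rle_dec y 1) as [Hy1|Hy1]; [|exists 0; intros; lra].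
  set (G := fun x => g (clamp x)).
  assert (HG : continuity G).
  { intros x. unfold continuity_pt, continue_in, limit1_in, limit_in. intros eps He.
    destruct (gc (clamp x) (clamp_unit x) eps He) as [d [Hd Hc]].
    exists d. split. lra. intros z [_ Hz]. simpl in *. unfold R_dist in *. unfold G.
    apply Hc. apply clamp_unit. pose proof (clamp_lip x z). lra. }
  assert (HG0 : G 0 = 0) by (unfold G; rewrite clamp_id; [auto|unfold unit_int; lra]).
  assert (HG1 : G 1 = 1) by (unfold G; rewrite clamp_id; [auto|unfold unit_int; lra]).
  destruct (IVT_gen G 0 1 y HG) as [x [Hx1 Hx2]].
  { rewrite HG0, HG1. unfold Rmin, Rmax. destruct Rle_dec; lra. }
  exists x. intros _. unfold Rmin, Rmax in Hx1. destruct Rle_dec in Hx1; [|lra].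
  split. lra. unfold G in Hx2. rewrite clamp_id in Hx2; [exact Hx2|]. unfold unit_int; lra.
Qed.


Definition fmk (finf : R -> R) (x : R) : R :=
  let n := Z.to_nat (Int_part x) in
  INR (fib n) + INR (fib (n - 1)) * finf (x - INR n).

Lemma Int_part_nat m y : 0 <= y < 1 -> Int_part (INR m + y) = Z.of_nat m.
Proof.
  intros H. symmetry. apply (Int_part_frac_part_spec (INR m + y) (Z.of_nat m) y H).
  rewrite INR_IZR_INZ. reflexivity.
Qed.

Lemma frac_part_nat m y : 0 <= y < 1 -> frac_part (INR m + y) = y.
Proof.
  intros H. symmetry. apply (Int_part_frac_part_spec (INR m + y) (Z.of_nat m) y H).
  rewrite INR_IZR_INZ. reflexivity.
Qed.

Lemma floor_nat x : 1 <= x -> exists m, (1 <= m)%nat /\ INR m <= x < INR m + 1.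
Proof.
  intros Hx. destruct (base_Int_part x) as [H1 H2].
  assert (Hz : (0 < Int_part x)%Z). { apply lt_IZR. simpl. lra. }
  exists (Z.to_nat (Int_part x)).
  rewrite INR_IZR_INZ, Z2Nat.id by lia. split. lia. lra.
Qed.

Lemma fmk_piece finf m x : finf 0 = 0 -> finf 1 = 1 -> (1 <= m)%nat -> INR m <= x <= INR m + 1 ->
  fmk finf x = INR (fib m) + INR (fib (m - 1)) * finf (x - INR m).
Proof.
  intros f0 f1 Hm Hx. unfold fmk.
  destruct (Req_dec x (INR m + 1)) as [E|E].
  - replace x with (INR (S m) + 0) by (rewrite S_INR; lra).
    rewrite Int_part_nat by lra. rewrite Nat2Z.id.
    replace (INR (S m) + 0 - INR (S m)) with 0 by ring.
    replace (INR (S m) + 0 - INR m) with 1 by (rewrite S_INR; ring).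
    rewrite f0, f1. rewrite fib_S by lia. rewrite plus_INR. replace (S m - 1)%nat with m by lia. ring.
  - assert (HI : Int_part x = Z.of_nat m).
    { replace x with (INR m + (x - INR m)) by ring. apply Int_part_nat. lra. }
    rewrite HI, Nat2Z.id. reflexivity.
Qed.
Lemma finf_g (g finf : R -> R) (g0 : g 0 = 0) (g1 : g 1 = 1) (gi : strict_incr_on unit_int g)
  (Hinv : forall y, 0 <= y <= 1 -> 0 <= finf y <= 1 /\ g (finf y) = y) :
  forall y, 0 <= y <= 1 -> finf (g y) = y.
Proof.
  intros y Hy.
  assert (Hgy : 0 <= g y <= 1).
  { pose proof (g_mono g gi 0 y ltac:(unfold unit_int; lra) Hy ltac:(lra)).
    pose proof (g_mono g gi y 1 Hy ltac:(unfold unit_int; lra) ltac:(lra)). lra. }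
  destruct (Hinv _ Hgy) as [H1 H2].
  destruct (Rtotal_order (finf (g y)) y) as [H|[H|H]]; auto.
  - pose proof (gi _ _ H1 Hy H). lra.
  - pose proof (gi _ _ Hy H1 H). lra.
Qed.

Lemma finf_incr (g finf : R -> R) (gi : strict_incr_on unit_int g)
  (Hinv : forall y, 0 <= y <= 1 -> 0 <= finf y <= 1 /\ g (finf y) = y) :
  strict_incr_on unit_int finf.
Proof.
  intros y1 y2 H1 H2 H. destruct (Hinv _ H1) as [A1 B1]. destruct (Hinv _ H2) as [A2 B2].
  destruct (Rlt_le_dec (finf y1) (finf y2)) as [C|C]; auto.
  pose proof (g_mono g gi _ _ A2 A1 C). lra.
Qed.

Lemma finf_cont (g finf : R -> R) (gi : strict_incr_on unit_int g)
  (Hinv : forall y, 0 <= y <= 1 -> 0 <= finf y <= 1 /\ g (finf y) = y) :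
  cont_on unit_int finf.
Proof.
  intros y Hy eps He.
  destruct (Hinv _ Hy) as [Hx Hgx]. set (x := finf y) in *.
  set (a := Rmax 0 (x - eps / 2)). set (b := Rmin 1 (x + eps / 2)).
  assert (Ha : unit_int a) by (unfold a, unit_int, Rmax; destruct Rle_dec; lra).
  assert (Hb : unit_int b) by (unfold b, unit_int, Rmin; destruct Rle_dec; lra).
  assert (Ha2 : x - eps / 2 <= a <= x) by (unfold a, Rmax; destruct Rle_dec; lra).
  assert (Hb2 : x <= b <= x + eps / 2) by (unfold b, Rmin; destruct Rle_dec; lra).
  assert (HdL : exists dL, 0 < dL /\ (a < x -> dL <= y - g a)).
  { destruct (Rlt_dec a x) as [C|C].
    - exists (y - g a). split; auto. pose proof (gi a x Ha Hx C). lra. lra.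
    - exists 1. split. lra. intros; contradiction. }
  assert (HdR : exists dR, 0 < dR /\ (x < b -> dR <= g b - y)).
  { destruct (Rlt_dec x b) as [C|C].
    - exists (g b - y). split; auto. pose proof (gi x b Hx Hb C). lra. lra.
    - exists 1. split. lra. intros; contradiction. }
  destruct HdL as [dL [HdL1 HdL2]]. destruct HdR as [dR [HdR1 HdR2]].
  exists (Rmin dL dR). split. unfold Rmin; destruct Rle_dec; lra.
  intros y' Hy' Hd.
  pose proof (Rmin_l dL dR). pose proof (Rmin_r dL dR).
  apply Rabs_lt_between in Hd.
  destruct (Hinv _ Hy') as [Hx' Hgx'].
  assert (U : finf y' <= b).
  { destruct (Rle_dec (finf y') b) as [C|C]; auto. exfalso.
    assert (b < finf y') by lra.
    assert (Hxb : x < b). { unfold b, Rmin in *. destruct Rle_dec; lra. }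
    pose proof (gi b (finf y') Hb Hx' H1). specialize (HdR2 Hxb). lra. }
  assert (L : a <= finf y').
  { destruct (Rle_dec a (finf y')) as [C|C]; auto. exfalso.
    assert (finf y' < a) by lra.
    assert (Hxa : a < x). { unfold a, Rmax in *. destruct Rle_dec; lra. }
    pose proof (gi (finf y') a Hx' Ha H1). specialize (HdL2 Hxa). lra. }
  apply Rabs_lt_between. lra.
Qed.
Lemma INR_fib_pos' n : 0 < INR (fib n).
Proof. pose proof (INR_fib_pos n). lra. Qed.

Lemma f_incr finf (f0 : finf 0 = 0) (f1 : finf 1 = 1) (fi : strict_incr_on unit_int finf)
  (fr : forall p, 0 <= p <= 1 -> 0 <= finf p <= 1) : strict_incr_on ge1 (fmk finf).
Proof.
  intros x y Hx Hy Hxy. unfold ge1 in *.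
  destruct (floor_nat x Hx) as [a [Ha1 Ha2]]. destruct (floor_nat y Hy) as [b [Hb1 Hb2]].
  rewrite (fmk_piece finf a x) by (auto; lra). rewrite (fmk_piece finf b y) by (auto; lra).
  pose proof (INR_fib_pos' (a - 1)). pose proof (INR_fib_pos' (b - 1)).
  destruct (Nat.lt_trichotomy a b) as [C|[C|C]].
  - assert (finf (x - INR a) < finf 1) by (apply fi; unfold unit_int; lra).
    rewrite f1 in H1.
    pose proof (fib_le (S a) b C). apply le_INR in H2. rewrite fib_S in H2 by lia. rewrite plus_INR in H2.
    pose proof (fr (y - INR b) ltac:(lra)). nra.
  - subst b. assert (finf (x - INR a) < finf (y - INR a)) by (apply fi; unfold unit_int; lra).
    nra.
  - assert (INR (S b) <= INR a) by (apply le_INR; lia). rewrite S_INR in H1. lra.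
Qed.

Lemma piece_cont finf (f0 : finf 0 = 0) (f1 : finf 1 = 1) (fc : cont_on unit_int finf) m x eps :
  (1 <= m)%nat -> INR m <= x <= INR m + 1 -> 0 < eps ->
  exists d, 0 < d /\ forall y, INR m <= y <= INR m + 1 -> Rabs (y - x) < d ->
    Rabs (fmk finf y - fmk finf x) < eps.
Proof.
  intros Hm Hx He. pose proof (INR_fib_pos' (m - 1)) as HF.
  destruct (fc (x - INR m) ltac:(unfold unit_int; lra) (eps / INR (fib (m - 1))) ltac:(apply Rdiv_lt_0_compat; lra)) as [d [Hd Hc]].
  exists d. split; auto. intros y Hy Hyx.
  rewrite (fmk_piece finf m y), (fmk_piece finf m x) by auto.
  specialize (Hc (y - INR m) ltac:(unfold unit_int; lra) ltac:(replace (y - INR m - (x - INR m)) with (y - x) by ring; auto)).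
  replace (INR (fib m) + INR (fib (m - 1)) * finf (y - INR m) - (INR (fib m) + INR (fib (m - 1)) * finf (x - INR m)))
    with (INR (fib (m - 1)) * (finf (y - INR m) - finf (x - INR m))) by ring.
  rewrite Rabs_mult, (Rabs_right (INR _)) by lra.
  apply (Rmult_lt_compat_l (INR (fib (m - 1)))) in Hc; auto.
  replace (INR (fib (m - 1)) * (eps / INR (fib (m - 1)))) with eps in Hc by (field; lra). exact Hc.
Qed.

Lemma f_cont finf (f0 : finf 0 = 0) (f1 : finf 1 = 1) (fc : cont_on unit_int finf) :
  cont_on ge1 (fmk finf).
Proof.
  intros x Hx eps He. unfold ge1 in *.
  destruct (floor_nat x Hx) as [m [Hm1 Hm2]].
  destruct (piece_cont finf f0 f1 fc m x eps Hm1 ltac:(lra) He) as [da [Hda Hca]].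
  destruct (Rlt_dec (INR m) x) as [C|C].
  - exists (Rmin da (Rmin (x - INR m) (INR m + 1 - x))).
    pose proof (Rmin_l da (Rmin (x - INR m) (INR m + 1 - x))).
    pose proof (Rmin_r da (Rmin (x - INR m) (INR m + 1 - x))).
    pose proof (Rmin_l (x - INR m) (INR m + 1 - x)). pose proof (Rmin_r (x - INR m) (INR m + 1 - x)).
    split. unfold Rmin; repeat destruct Rle_dec; lra.
    intros y Hy Hyx. apply Rabs_lt_between in Hyx as Hyx'. apply Hca. lra. lra.
  - assert (Ex : x = INR m) by lra.
    destruct (Nat.eq_dec m 1) as [E1|E1].
    + exists (Rmin da 1). pose proof (Rmin_l da 1). pose proof (Rmin_r da 1).
      split. unfold Rmin; destruct Rle_dec; lra.
      intros y Hy Hyx. unfold ge1 in Hy. apply Rabs_lt_between in Hyx as Hyx'. subst m. apply Hca.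
      simpl in *. lra. lra.
    + assert (Hm' : INR (m - 1) + 1 = INR m) by (rewrite minus_INR by lia; simpl; ring).
      destruct (piece_cont finf f0 f1 fc (m - 1) x eps ltac:(lia) ltac:(lra) He) as [db [Hdb Hcb]].
      exists (Rmin da (Rmin db 1)).
      pose proof (Rmin_l da (Rmin db 1)). pose proof (Rmin_r da (Rmin db 1)).
      pose proof (Rmin_l db 1). pose proof (Rmin_r db 1).
      split. unfold Rmin; repeat destruct Rle_dec; lra.
      intros y Hy Hyx. apply Rabs_lt_between in Hyx as Hyx'.
      destruct (Rle_dec (INR m) y).
      * apply Hca. lra. lra.
      * apply Hcb. lra. lra.
Qed.

Lemma f_nat finf (f0 : finf 0 = 0) (f1 : finf 1 = 1) n : (1 <= n)%nat -> fmk finf (INR n) = INR (fib n).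
Proof.
  intros Hn. rewrite (fmk_piece finf n) by (auto; lra). replace (INR n - INR n) with 0 by ring.
  rewrite f0. ring.
Qed.

Lemma f_unif finf (f0 : finf 0 = 0) (f1 : finf 1 = 1) n p : (1 <= n)%nat -> 0 <= p <= 1 ->
  fn (fmk finf) n p = finf p.
Proof.
  intros Hn Hp. unfold fn.
  rewrite (fmk_piece finf n (INR n + p)) by (auto; lra).
  rewrite (fmk_piece finf n (INR n + 1)) by (auto; lra).
  rewrite (fmk_piece finf n (INR n)) by (auto; lra).
  replace (INR n + p - INR n) with p by ring. replace (INR n + 1 - INR n) with 1 by ring.
  replace (INR n - INR n) with 0 by ring. rewrite f0, f1.
  pose proof (INR_fib_pos' (n - 1)). field. lra.
Qed.
Lemma tt_range K e k : is_zeck (K k) (e k) -> 0 <= tt K e k < 1.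
Proof.
  intros Hz. pose proof (zeck_len _ _ Hz) as [H1 H2]. pose proof (zeck_len_pos _ _ Hz).
  rewrite fib_S in H2 by lia. apply le_INR in H1. apply lt_INR in H2. rewrite plus_INR in H2.
  pose proof (INR_fib_pos' (length (e k) - 1)). unfold tt. split.
  - apply Rdiv_le_0_compat; lra.
  - apply (Rmult_lt_reg_r (INR (fib (length (e k) - 1)))); auto. unfold Rdiv.
    rewrite Rmult_assoc, Rinv_l by lra. lra.
Qed.

Theorem theorem5p18 (K : nat -> nat) (g : R -> R) :
  cont_LBD K g ->
  exists f finf : R -> R,
    uniform_continuation f finf /\
    (forall y, 0 <= y <= 1 -> finf (g y) = y) /\
    (forall x, 0 <= x <= 1 -> g (finf x) = x) /\
    exists x : nat -> R,
      (forall n, (1 <= n)%nat -> 1 <= x n /\ f (x n) = INR (K n)) /\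
      equidistributed x.
Proof.
  intros [HK [_ [g0 [g1 [Hmu [gc gi]]]]]].
  pose proof (g_inv_ex g g0 g1 gc) as Hex.
  set (finf := fun y => proj1_sig (constructive_indefinite_description _ (Hex y))).
  assert (Hinv : forall y, 0 <= y <= 1 -> 0 <= finf y <= 1 /\ g (finf y) = y).
  { intros y Hy. unfold finf. destruct (constructive_indefinite_description _ (Hex y)) as [x Hx]. simpl. auto. }
  assert (Hez : forall k, exists e, (1 <= k)%nat -> is_zeck (K k) e).
  { intros k. destruct (le_lt_dec 1 k) as [C|C].
    - destruct HK as [HK1 _]. destruct (zeck_exists (K k) (HK1 k C)) as [e He]. exists e; auto.
    - exists nil. intros; lia. }
  set (e := fun k => proj1_sig (constructive_indefinite_description _ (Hez k))).
  assert (He : forall k, (1 <= k)%nat -> is_zeck (K k) (e k)).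
  { intros k Hk. unfold e. destruct (constructive_indefinite_description _ (Hez k)) as [x Hx]. simpl. auto. }
  pose proof (finf_g g finf g0 g1 gi Hinv) as Hfg.
  assert (f0 : finf 0 = 0) by (rewrite <- g0 at 1; apply Hfg; lra).
  assert (f1 : finf 1 = 1) by (rewrite <- g1 at 1; apply Hfg; lra).
  assert (fr : forall p, 0 <= p <= 1 -> 0 <= finf p <= 1) by (intros; apply Hinv; auto).
  pose proof (finf_incr g finf gi Hinv) as fi.
  pose proof (finf_cont g finf gi Hinv) as fc.
  exists (fmk finf), finf.
  split.
  { split. apply f_incr; auto.
    split. apply f_cont; auto.
    split. intros n Hn. apply f_nat; auto.
    split. { intros eps Heps. exists 0%nat. intros n p _ Hn Hp. rewrite f_unif by auto.
             rewrite Rminus_diag, Rabs_R0. exact Heps. }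
    split; auto. }
  split; [exact Hfg|].
  split; [intros x Hx; apply Hinv; auto|].
  exists (fun k => INR (length (e k)) + g (tt K e k)).
  assert (Hgt : forall k, (1 <= k)%nat -> 0 <= g (tt K e k) < 1 /\ 0 <= tt K e k < 1).
  { intros k Hk. pose proof (tt_range K e k (He k Hk)) as Ht.
    split; [|exact Ht]. split.
    - rewrite <- g0. apply (g_mono g gi); unfold unit_int; lra.
    - rewrite <- g1. apply gi; unfold unit_int; lra. }
  split.
  - intros n Hn. destruct (Hgt n Hn) as [Hg1 Ht].
    pose proof (zeck_len_pos _ _ (He n Hn)) as Hl.
    split.
    + assert (1 <= INR (length (e n))) by (replace 1 with (INR 1) by reflexivity; apply le_INR; auto). lra.
    + rewrite (fmk_piece finf (length (e n))) by (auto; lra).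
      replace (INR (length (e n)) + g (tt K e n) - INR (length (e n))) with (g (tt K e n)) by ring.
      rewrite Hfg by lra. unfold tt. pose proof (INR_fib_pos' (length (e n) - 1)). field. lra.
  - intros beta Hb. unfold unit_int in Hb.
    destruct (Hinv beta Hb) as [Hfb Hgfb].
    apply is_lim_seq_ext with (density_seq (fun k => tt K e k <= finf beta)).
    { intros n. unfold density_seq. f_equal. f_equal. apply count_ext. intros k Hk.
      destruct (Hgt k Hk) as [Hg1 Ht].
      rewrite frac_part_nat by lra. split.
      - intros H. rewrite <- Hgfb. apply (g_mono g gi); unfold unit_int; lra.
      - intros H. destruct (Rle_dec (tt K e k) (finf beta)) as [C|C]; auto. exfalso.
        assert (finf beta < tt K e k) by lra.
        pose proof (gi (finf beta) (tt K e k) Hfb ltac:(unfold unit_int; lra) H0). lra. }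
    replace (Finite beta) with (Finite (g (finf beta))) by (rewrite Hgfb; reflexivity). apply (key K g e HK Hmu g0 g1 gc gi He). exact Hfb.
Qed.
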